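(* Let $\phi:\mathbb{N}\to\mathbb{N}$ be any function. For any instance oracle $f$ with $\max\{|f(G,v)|: G \text{ an } n\text{-node graph}, v\in G\}=o(n\phi(n))$ and any deterministic exploration algorithm $A$, there exist a constant $c>0$ and infinitely many $n$ such that for each of them there are an $n$-node graph $G$ and a starting node $v$ for which the agent executing $A$ with input $f(G,v)$ from $v$ does not explore $G$ within fewer than $c\, n^2/2^{\phi(n)}$ edge traversals. That is, exploration takes time $\Omega(n^2/2^{\phi(n)})$ on some $n$-node graph, for arbitrarily large $n$.
   Context: Model: a graph is a simple connected undirected graph with $n$ nodes. Nodes are unlabeled; at each node of degree $d$ the incident edges carry distinct port numbers $0,\dots,d-1$, arbitrarily assigned. A mobile agent starts at some node. At each step, located at a node $u$ whose degree it knows, it chooses a port at $u$ and traverses the corresponding edge to a neighbor $w$; upon arrival it learns the port number of this edge at $w$ and the degree of $w$. The agent must visit all nodes and stop; the time of exploration is the number of edge traversals. A deterministic exploration algorithm receives as input a binary string (advice); its size is its length. An instance oracle is a function assigning a binary string $f(G,v)$ to each pair $(G,v)$ where $G$ is a port-numbered graph and $v$ is the starting node of the agent in $G$. *)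

(* Defs.v *)
From HB Require Import structures.
From mathcomp Require Import all_boot all_order all_algebra.
Set Implicit Arguments. Unset Strict Implicit. Unset Printing Implicit Defensive.
Import Order.TTheory GRing.Theory Num.Theory.

(* A port-numbered graph on n nodes (nodes are 'I_n; the labels are invisible
   to the agent).  [deg u] is the degree of u; for a port p < deg u,
   [nbr u p] is the neighbour reached through port p and [bport u p] is the
   port number of that edge at the neighbour.  Values for p >= deg u are
   irrelevant. *)
Record PGraph (n : nat) := PG {
  deg   : 'I_n -> nat;
  nbr   : 'I_n -> nat -> 'I_n;
  bport : 'I_n -> nat -> nat
}.

Definition adj n (G : PGraph n) : rel 'I_n :=
  fun u w => has (fun p => nbr G u p == w) (iota 0 (deg G u)).

Definition is_pgraph n (G : PGraph n) : Prop :=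
  (* edges are undirected: port maps form an involution *)
  (forall u p, p < deg G u ->
     [/\ bport G u p < deg G (nbr G u p),
         nbr G (nbr G u p) (bport G u p) = u &
         bport G (nbr G u p) (bport G u p) = p])
  /\ (forall u p, p < deg G u -> nbr G u p <> u)
  /\ (forall u p q, p < deg G u -> q < deg G u -> nbr G u p = nbr G u q -> p = q)
  /\ (forall u w, connect (adj G) u w).

Definition Oracle := forall n, PGraph n -> 'I_n -> seq bool.

(* A deterministic exploration algorithm: given the advice, the degree of
   the start node, and the history of observations so far (for each
   traversal: the port of the edge at the arrival node and the degree of the
   arrival node), it either chooses a port (Some p) or stops (None). *)
Definition Algo := seq bool -> nat -> seq (nat * nat) -> option nat.

Fixpoint walk n (G : PGraph n) (A : Algo) (adv : seq bool) (v : 'I_n) (k : nat)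
  : option ('I_n * seq (nat * nat)) :=
  match k with
  | 0 => Some (v, [::])
  | k'.+1 =>
    match walk G A adv v k' with
    | Some (u, h) =>
      match A adv (deg G v) h with
      | Some p =>
        if p < deg G u then
          Some (nbr G u p, rcons h (bport G u p, deg G (nbr G u p)))
        else None
      | None => None
      end
    | None => None
    end
  end.

Definition explores_in n (G : PGraph n) (A : Algo) (adv : seq bool) (v : 'I_n)
  (k : nat) : Prop :=
  (exists u h, walk G A adv v k = Some (u, h) /\ A adv (deg G v) h = None)
  /\ (forall w : 'I_n, exists i, i <= k /\ exists h, walk G A adv v i = Some (w, h)).

(* Main.v *)
Require Import Defs.
From HB Require Import structures.
From mathcomp Require Import all_boot all_order all_algebra.
From mathcomp Require Import zify.
From Stdlib Require Import Classical.
Import Order.TTheory GRing.Theory Num.Theory.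
Set Implicit Arguments. Unset Strict Implicit. Unset Printing Implicit Defensive.


Definition Pj m (s : {ffun 'I_m -> 'I_m * 'I_m}) (a b : nat) (j : 'I_m) : bool :=
  ((s j).1 == a :> nat) && ((s j).2 == b :> nat).
Definition hit m (s : {ffun 'I_m -> 'I_m * 'I_m}) a b := [exists j, Pj s a b j].
Definition zi m (s : {ffun 'I_m -> 'I_m * 'I_m}) a b : nat :=
  if [pick j | Pj s a b j] is Some j then val j else 0.
Definition sj m (s : {ffun 'I_m -> 'I_m * 'I_m}) (j : nat) : nat * nat :=
  if [pick i : 'I_m | val i == j] is Some i then (val (s i).1, val (s i).2) else (0,0).

Lemma sjE m (s : {ffun 'I_m -> 'I_m * 'I_m}) (i : 'I_m) : sj s i = (val (s i).1, val (s i).2).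
Proof.
rewrite /sj; case: pickP => [i' /eqP/val_inj -> //|/(_ i)]; by rewrite eqxx.
Qed.

Lemma hitP m (s : {ffun 'I_m -> 'I_m * 'I_m}) (hs : injective s) (j : 'I_m) a b :
  Pj s a b j -> hit s a b /\ zi s a b = j.
Proof.
move=> H; split; first by apply/existsP; exists j.
rewrite /zi; case: pickP => [j' H'|/(_ j)]; last by rewrite H.
congr val; apply: hs; move: H H'; rewrite /Pj.
case: (s j) => x y; case: (s j') => x' y' /= /andP[/eqP h1 /eqP h2] /andP[/eqP h3 /eqP h4].
by congr pair; apply: val_inj; rewrite /= ?h1 ?h3 ?h2 ?h4.
Qed.

Lemma hit_zi m (s : {ffun 'I_m -> 'I_m * 'I_m}) a b :
  hit s a b -> exists j : 'I_m, Pj s a b j /\ zi s a b = j.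
Proof.
move=> /existsP [j0 H0]; rewrite /zi; case: pickP => [j H|/(_ j0)]; last by rewrite H0.
by exists j.
Qed.

Definition dg m (u : nat) := if u < 2 * m then m else 2.
Definition nb m (s : {ffun 'I_m -> 'I_m * 'I_m}) (u p : nat) : nat :=
  if u < m then (if hit s u p then 2 * m + zi s u p else m + p)
  else if u < 2 * m then (if hit s p (u - m) then 2 * m + zi s p (u - m) else p)
  else (if p == 0 then (sj s (u - 2 * m)).1 else m + (sj s (u - 2 * m)).2).
Definition bp m (s : {ffun 'I_m -> 'I_m * 'I_m}) (u p : nat) : nat :=
  if u < m then (if hit s u p then 0 else u)
  else if u < 2 * m then (if hit s p (u - m) then 1 else u - m)
  else (if p == 0 then (sj s (u - 2 * m)).2 else (sj s (u - 2 * m)).1).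



Lemma nbL m (s : {ffun 'I_m -> 'I_m * 'I_m}) u p : u < m -> @nb m s u p = if hit s u p then 2 * m + zi s u p else m + p.
Proof. by rewrite /nb => ->. Qed.
Lemma nbR m (s : {ffun 'I_m -> 'I_m * 'I_m}) b p : b < m -> @nb m s (m + b) p = if hit s p b then 2 * m + zi s p b else p.
Proof.
move=> hb; rewrite /nb; have -> : (m + b < m) = false by lia.
have -> : (m + b < 2 * m) by lia. by rewrite addKn.
Qed.
Lemma nbZ m (s : {ffun 'I_m -> 'I_m * 'I_m}) j p : @nb m s (2 * m + j) p = if p == 0 then (sj s j).1 else m + (sj s j).2.
Proof.
rewrite /nb; have -> : (2 * m + j < m) = false by lia.
have -> : (2 * m + j < 2 * m) = false by lia. by rewrite addKn.
Qed.
Lemma bpL m (s : {ffun 'I_m -> 'I_m * 'I_m}) u p : u < m -> @bp m s u p = if hit s u p then 0 else u.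
Proof. by rewrite /bp => ->. Qed.
Lemma bpR m (s : {ffun 'I_m -> 'I_m * 'I_m}) b p : b < m -> @bp m s (m + b) p = if hit s p b then 1 else b.
Proof.
move=> hb; rewrite /bp; have -> : (m + b < m) = false by lia.
have -> : (m + b < 2 * m) by lia. by rewrite addKn.
Qed.
Lemma bpZ m (s : {ffun 'I_m -> 'I_m * 'I_m}) j p : @bp m s (2 * m + j) p = if p == 0 then (sj s j).2 else (sj s j).1.
Proof.
rewrite /bp; have -> : (2 * m + j < m) = false by lia.
have -> : (2 * m + j < 2 * m) = false by lia. by rewrite addKn.
Qed.
Lemma dgLR m u : u < 2 * m -> dg m u = m.
Proof. by rewrite /dg => ->. Qed.
Lemma dgZ m j : dg m (2 * m + j) = 2.
Proof. by rewrite /dg; have -> : (2 * m + j < 2 * m) = false by lia. Qed.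

Lemma sj_lt m (s : {ffun 'I_m -> 'I_m * 'I_m}) j : 0 < m -> (sj s j).1 < m /\ (sj s j).2 < m.
Proof. by rewrite /sj; case: pickP => [i _|_] //=. Qed.

Lemma sj_ok m (s : {ffun 'I_m -> 'I_m * 'I_m}) (hs : injective s) j : j < m ->
  let a := (sj s j).1 in let b := (sj s j).2 in hit s a b /\ zi s a b = j.
Proof.
move=> hj /=; have := sjE s (Ordinal hj); rewrite /= => ->.
have [] := hitP hs (j := Ordinal hj) (a := (s (Ordinal hj)).1) (b := (s (Ordinal hj)).2) => //.
by rewrite /Pj !eqxx.
Qed.

Lemma node_cases m u : u < 3 * m ->
  [\/ u < m, exists2 b, b < m & u = m + b | exists2 j, j < m & u = 2 * m + j].
Proof.
move=> hu; case: (ltnP u m) => h1; first by apply: Or31.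
case: (ltnP u (2 * m)) => h2; [apply: Or32; exists (u - m) | apply: Or33; exists (u - 2 * m)]; lia.
Qed.

Lemma inv_nat m (s : {ffun 'I_m -> 'I_m * 'I_m}) (hs : injective s) u p : u < 3 * m -> p < dg m u ->
  [/\ @bp m s u p < dg m (nb s u p), nb s (nb s u p) (bp s u p) = u
    & bp s (nb s u p) (bp s u p) = p].
Proof.
move=> hu; case/node_cases: (hu) => [hL|[b hb ->]|[j hj ->]].
- rewrite dgLR; last lia. move=> hp; rewrite nbL // bpL //.
  case H: (hit s u p).
  + have [j [Pj' ->]] := hit_zi H. move: Pj'; rewrite /Pj => /andP[/eqP e1 /eqP e2].
    rewrite dgZ nbZ bpZ /= (sjE s j) /= e1 e2; split => //.
  + rewrite dgLR; last lia. rewrite nbR // bpR // H; split => //.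
- rewrite dgLR; last lia. move=> hp; rewrite nbR // bpR //.
  case H: (hit s p b).
  + have [j [Pj' ->]] := hit_zi H. move: Pj'; rewrite /Pj => /andP[/eqP e1 /eqP e2].
    rewrite dgZ nbZ bpZ /= (sjE s j) /= e1 e2; split => //.
  + rewrite dgLR; last lia. rewrite nbL // bpL // H; split => //.
- rewrite dgZ => hp; rewrite nbZ bpZ.
  have [h1 h2] := sj_ok hs hj. have m0 : 0 < m by lia.
  have [l1 l2] := sj_lt s j m0.
  case: (p =P 0) => [->|p0].
  + rewrite nbL // bpL // h1 h2 dgLR; [split => // | lia].
  + rewrite nbR // bpR // h1 h2 dgLR; [split => // | lia]; lia.
Qed.

Lemma noloop_nat m (s : {ffun 'I_m -> 'I_m * 'I_m}) u p : u < 3 * m -> p < dg m u -> @nb m s u p != u.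
Proof.
move=> hu; case/node_cases: (hu) => [hL|[b hb ->]|[j hj ->]].
- rewrite dgLR; last lia. move=> hp; rewrite nbL //; case: ifP => _; lia.
- rewrite dgLR; last lia. move=> hp; rewrite nbR //; case: ifP => _; lia.
- rewrite dgZ => hp; rewrite nbZ. have m0 : 0 < m by lia.
  have [l1 l2] := sj_lt s j m0. case: ifP => _; lia.
Qed.

Lemma nomulti_nat m (s : {ffun 'I_m -> 'I_m * 'I_m}) (hs : injective s) u p q : u < 3 * m -> p < dg m u -> q < dg m u ->
  @nb m s u p = nb s u q -> p = q.
Proof.
move=> hu; case/node_cases: (hu) => [hL|[b hb ->]|[j hj ->]].
- rewrite dgLR; last lia. move=> hp hq; rewrite !nbL //.
  case Hp: (hit s u p); case Hq: (hit s u q); try lia.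
  have [j [Pp ->]] := hit_zi Hp. have [j' [Pq ->]] := hit_zi Hq.
  move=> /addnI /val_inj ej; move: Pp Pq; rewrite ej /Pj => /andP[_ /eqP <-] /andP[_ /eqP <-] //.
- rewrite dgLR; last lia. move=> hp hq; rewrite !nbR //.
  case Hp: (hit s p b); case Hq: (hit s q b); try lia.
  have [j [Pp ->]] := hit_zi Hp. have [j' [Pq ->]] := hit_zi Hq.
  move=> /addnI /val_inj ej; move: Pp Pq; rewrite ej /Pj => /andP[/eqP <- _] /andP[/eqP <- _] //.
- rewrite dgZ => hp hq; rewrite !nbZ. have m0 : 0 < m by lia.
  have [l1 l2] := sj_lt s j m0. case: (p =P 0); case: (q =P 0); lia.
Qed.

Lemma nb_lt m (s : {ffun 'I_m -> 'I_m * 'I_m}) u p : u < 3 * m -> p < dg m u -> @nb m s u p < 3 * m.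
Proof.
move=> hu; case/node_cases: (hu) => [hL|[b hb ->]|[j hj ->]].
- rewrite dgLR; last lia. move=> hp; rewrite nbL //.
  case H: (hit s u p); last lia. have [j [_ ->]] := hit_zi H. have := ltn_ord j; lia.
- rewrite dgLR; last lia. move=> hp; rewrite nbR //.
  case H: (hit s p b); last lia. have [j [_ ->]] := hit_zi H. have := ltn_ord j; lia.
- rewrite dgZ => hp; rewrite nbZ. have m0 : 0 < m by lia.
  have [l1 l2] := sj_lt s j m0. case: ifP => _; lia.
Qed.


Definition Gs N' m (s : {ffun 'I_m -> 'I_m * 'I_m}) : PGraph N'.+1 :=
  PG (fun u : 'I_N'.+1 => dg m u) (fun u p => inord (nb s u p)) (fun u p => bp s u p).

Lemma adjE N' m (s : {ffun 'I_m -> 'I_m * 'I_m}) (hn : N'.+1 = 3 * m) a b p :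
  a < 3 * m -> p < dg m a -> nb s a p = b ->
  adj (Gs N' s) (inord a) (inord b).
Proof.
have iK x : x < 3 * m -> (inord x : 'I_N'.+1) = x :> nat by move=> h; rewrite inordK // hn.
move=> ha hp e; apply/hasP; exists p; first by rewrite mem_iota /= iK.
apply/eqP/val_inj; rewrite /= !iK // -?e //; apply: nb_lt => //.
Qed.

Lemma Gs_pgraph N' m (s : {ffun 'I_m -> 'I_m * 'I_m}) (hn : N'.+1 = 3 * m) (hs : injective s) :
  is_pgraph (Gs N' s).
Proof.
have lt3 (u : 'I_N'.+1) : u < 3 * m by rewrite -hn.
have iK x : x < 3 * m -> (inord x : 'I_N'.+1) = x :> nat by move=> h; rewrite inordK // hn.
split; [|split; [|split]].
- move=> u p /= hp; have [h1 h2 h3] := inv_nat hs (lt3 u) hp.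
  have hl := nb_lt s (lt3 u) hp.
  rewrite (iK _ hl); split => //; by rewrite h2 inord_val.
- move=> u p /= hp e; have := noloop_nat s (lt3 u) hp; rewrite -{2}e iK ?eqxx //.
  exact: nb_lt.
- move=> u p q /= hp hq e; apply: (nomulti_nat hs (lt3 u) hp hq).
  have := congr1 val e; rewrite /= !iK //; exact: nb_lt.
- have m0 : 0 < m by have := lt3 (ord0); lia.
  set G := Gs N' s.
  pose C a b := connect (adj G) (inord a) (inord b).
  have A1 a b p : a < 3 * m -> p < dg m a -> nb s a p = b -> C a b.
    by move=> ha hp e; apply: connect1; apply: (adjE hn ha hp e).
  have T a b c : C a b -> C b c -> C a c by apply: connect_trans.
  have LR a b : a < m -> b < m -> C a (m + b).
    move=> ha hb; case H: (hit s a b).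
    + have [j [Pj' ez]] := hit_zi H; move: Pj'; rewrite /Pj => /andP[/eqP e1 /eqP e2].
      apply: (T _ (2 * m + j)).
      * apply: (A1 _ _ b); [lia| rewrite dgLR; lia| by rewrite nbL // H ez].
      * apply: (A1 _ _ 1); [have := ltn_ord j; lia| by rewrite dgZ| by rewrite nbZ sjE /= e2].
    + apply: (A1 _ _ b); [lia| rewrite dgLR; lia| by rewrite nbL // H].
  have RL a b : a < m -> b < m -> C (m + b) a.
    move=> ha hb; case H: (hit s a b).
    + have [j [Pj' ez]] := hit_zi H; move: Pj'; rewrite /Pj => /andP[/eqP e1 /eqP e2].
      apply: (T _ (2 * m + j)).
      * apply: (A1 _ _ a); [lia| rewrite dgLR; lia| by rewrite nbR // H ez].
      * apply: (A1 _ _ 0); [have := ltn_ord j; lia| by rewrite dgZ| by rewrite nbZ sjE /= e1].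
    + apply: (A1 _ _ a); [lia| rewrite dgLR; lia| by rewrite nbR // H].
  have ZL j : j < m -> C (2 * m + j) (sj s j).1 /\ C (sj s j).1 (2 * m + j).
    move=> hj; have [h1 h2] := sj_ok hs hj; have [l1 l2] := sj_lt s j m0; split.
    + apply: (A1 _ _ 0); [lia| by rewrite dgZ| by rewrite nbZ].
    + apply: (A1 _ _ (sj s j).2); [lia| rewrite dgLR; lia| by rewrite nbL // h1 h2].
  have toL0 a : a < 3 * m -> C a 0 /\ C 0 a.
    move=> ha; case/node_cases: ha => [hL|[b hb ->]|[j hj ->]].
    + split; [apply: (T _ (m + 0)); [apply: LR| apply: RL]| apply: (T _ (m + 0)); [apply: LR| apply: RL]]; lia.
    + split; [apply: RL| apply: LR]; lia.
    + have [z1 z2] := ZL j hj; have [l1 l2] := sj_lt s j m0; split.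
      * apply: (T _ _ _ z1); apply: (T _ (m + 0)); [apply: LR| apply: RL]; lia.
      * apply: (T _ _ _ _ z2); apply: (T _ (m + 0)); [apply: LR| apply: RL]; lia.
  move=> u w; have [hu _] := toL0 u (lt3 u); have [_ hw] := toL0 w (lt3 w).
  by have := T _ _ _ hu hw; rewrite /C !inord_val.
Qed.


Lemma walk_none n (G : PGraph n) (A : Algo) adv v k u h :
  walk G A adv v k = Some (u, h) -> A adv (deg G v) h = None ->
  forall t, k < t -> walk G A adv v t = None.
Proof.
move=> hk hA t /subnKC <-; elim: (t - k.+1) => [|d IH].
- by rewrite addn0 /= hk hA.
- rewrite addnS; move: IH; set x := k.+1 + d => IH. change (match walk G A adv v x with Some (u0, h0) => match A adv (deg G v) h0 with Some p => if p < deg G u0 then Some (nbr G u0 p, rcons h0 (bport G u0 p, deg G (nbr G u0 p))) else None | None => None end | None => None end = None). by rewrite IH.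
Qed.

Definition W N' m (s : {ffun 'I_m -> 'I_m * 'I_m}) A a t :=
  walk (Gs N' s) A a (inord 0) t.
Definition atZ N' m (s : {ffun 'I_m -> 'I_m * 'I_m}) A a (j : nat) t : bool :=
  if W N' s A a t is Some (u, _) then (u == 2 * m + j :> nat) else false.
Definition tau N' m (s : {ffun 'I_m -> 'I_m * 'I_m}) A a B j :=
  find (atZ N' s A a j) (iota 0 B.+1).

Definition Expl N' m (s : {ffun 'I_m -> 'I_m * 'I_m}) A a B :=
  exists2 k, k <= B & explores_in (Gs N' s) A a (inord 0) k.

Lemma tau_spec N' m (s : {ffun 'I_m -> 'I_m * 'I_m}) A a B (hn : N'.+1 = 3 * m) j :
  Expl N' s A a B -> j < m ->
  tau N' s A a B j <= B /\ atZ N' s A a j (tau N' s A a B j) /\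
  forall t, atZ N' s A a j t -> tau N' s A a B j <= t.
Proof.
move=> [k hkB [[u [h [hk hA]]] hall]] hj.
have [i [hik [h' hi]]] := hall (inord (2 * m + j)).
have Pi : atZ N' s A a j i.
  by rewrite /atZ /W hi inordK // hn; lia.
have hasP' : has (atZ N' s A a j) (iota 0 B.+1).
  apply/hasP; exists i => //; rewrite mem_iota; lia.
have lt : tau N' s A a B j < B.+1 by rewrite /tau -[X in _ < X](size_iota 0) -has_find.
have nthP := nth_find 0 hasP'; rewrite -/(tau N' s A a B j) nth_iota // add0n in nthP.
split; first lia. split => // t Pt.
case: (leqP t B) => htB.
- rewrite leqNgt; apply/negP => ht.
  have := before_find 0 ht; rewrite nth_iota ?add0n ?Pt //; lia.
- move: Pt; rewrite /atZ /W (walk_none hk hA) //; lia.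
Qed.


Lemma pair_ord_eq m (x y : 'I_m * 'I_m) : x.1 = y.1 :> nat -> x.2 = y.2 :> nat -> x = y.
Proof. by case: x y => [x1 x2] [y1 y2] /= /val_inj -> /val_inj ->. Qed.

Lemma entry_nat m (s s' : {ffun 'I_m -> 'I_m * 'I_m}) u p (j : 'I_m) :
  u < 3 * m -> p < dg m u -> nb s u p = 2 * m + j -> nb s' u p = 2 * m + j -> s j = s' j.
Proof.
move=> hu; case/node_cases: (hu) => [hL|[b hb ->]|[i hi ->]].
- rewrite dgLR; last lia. move=> hp; rewrite !nbL //.
  case H: (hit s u p); last lia. case H': (hit s' u p); last lia.
  have [k [Pk ->]] := hit_zi H; have [k' [Pk' ->]] := hit_zi H'.
  move=> /addnI /val_inj ek /addnI /val_inj ek'; move: Pk Pk'; rewrite ek ek' /Pj.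
  by move=> /andP[/eqP e1 /eqP e2] /andP[/eqP e3 /eqP e4]; apply: pair_ord_eq; rewrite ?e1 ?e2 ?e3 ?e4.
- rewrite dgLR; last lia. move=> hp; rewrite !nbR //.
  case H: (hit s p b); last lia. case H': (hit s' p b); last lia.
  have [k [Pk ->]] := hit_zi H; have [k' [Pk' ->]] := hit_zi H'.
  move=> /addnI /val_inj ek /addnI /val_inj ek'; move: Pk Pk'; rewrite ek ek' /Pj.
  by move=> /andP[/eqP e1 /eqP e2] /andP[/eqP e3 /eqP e4]; apply: pair_ord_eq; rewrite ?e1 ?e2 ?e3 ?e4.
- move=> _; rewrite nbZ; have m0 : 0 < m by lia.
  have [l1 l2] := sj_lt s i m0. case: ifP => _; lia.
Qed.

Lemma local_nat m (s s' : {ffun 'I_m -> 'I_m * 'I_m}) (hs : injective s) (hs' : injective s') u p :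
  u < 3 * m -> p < dg m u ->
  (forall j : 'I_m, [\/ u = 2 * m + j, nb s u p = 2 * m + j | nb s' u p = 2 * m + j] -> s j = s' j) ->
  nb s u p = nb s' u p /\ bp s u p = bp s' u p.
Proof.
move=> hu; case/node_cases: (hu) => [hL|[b hb ->]|[i hi ->]].
- rewrite dgLR; last lia. move=> hp Hj; rewrite !nbL // !bpL //.
  case H: (hit s u p); case H': (hit s' u p) => //.
  + have [k [Pk ek]] := hit_zi H.
    have e : s k = s' k by apply: Hj; apply: Or32; rewrite nbL // H ek.
    have Pk' : Pj s' u p k by rewrite /Pj -e.
    by have [_ ->] := hitP hs' Pk'; rewrite ek.
  + have [k [Pk ek]] := hit_zi H.
    have e : s k = s' k by apply: Hj; apply: Or32; rewrite nbL // H ek.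
    have Pk' : Pj s' u p k by rewrite /Pj -e.
    by have [] := hitP hs' Pk'; rewrite H'.
  + have [k [Pk ek]] := hit_zi H'.
    have e : s k = s' k by apply: Hj; apply: Or33; rewrite nbL // H' ek.
    have Pk' : Pj s u p k by rewrite /Pj e.
    by have [] := hitP hs Pk'; rewrite H.
- rewrite dgLR; last lia. move=> hp Hj; rewrite !nbR // !bpR //.
  case H: (hit s p b); case H': (hit s' p b) => //.
  + have [k [Pk ek]] := hit_zi H.
    have e : s k = s' k by apply: Hj; apply: Or32; rewrite nbR // H ek.
    have Pk' : Pj s' p b k by rewrite /Pj -e.
    by have [_ ->] := hitP hs' Pk'; rewrite ek.
  + have [k [Pk ek]] := hit_zi H.
    have e : s k = s' k by apply: Hj; apply: Or32; rewrite nbR // H ek.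
    have Pk' : Pj s' p b k by rewrite /Pj -e.
    by have [] := hitP hs' Pk'; rewrite H'.
  + have [k [Pk ek]] := hit_zi H'.
    have e : s k = s' k by apply: Hj; apply: Or33; rewrite nbR // H' ek.
    have Pk' : Pj s p b k by rewrite /Pj e.
    by have [] := hitP hs Pk'; rewrite H.
- move=> hp Hj; rewrite !nbZ !bpZ.
  have e : s (Ordinal hi) = s' (Ordinal hi) by apply: Hj; apply: Or31.
  have := sjE s (Ordinal hi); have := sjE s' (Ordinal hi); rewrite /= -e => -> ->; by [].
Qed.


Lemma Winj N' m (s s' : {ffun 'I_m -> 'I_m * 'I_m}) A a B (hn : N'.+1 = 3 * m)
  (hs : injective s) (hs' : injective s') :
  Expl N' s A a B -> Expl N' s' A a B ->
  (forall j : 'I_m, tau N' s A a B j = tau N' s' A a B j) -> s = s'.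
Proof.
move=> Es Es' ht.
have lt3 (u : 'I_N'.+1) : u < 3 * m by rewrite -hn.
have iK x : x < 3 * m -> (inord x : 'I_N'.+1) = x :> nat by move=> h; rewrite inordK // hn.
have Q (j : 'I_m) : (forall t, t < tau N' s A a B j -> W N' s A a t = W N' s' A a t) -> s j = s' j.
  have [_ [Z1 _]] := tau_spec hn Es (ltn_ord j).
  have [_ [Z2 _]] := tau_spec hn Es' (ltn_ord j).
  rewrite -ht in Z2.
  move: (tau N' s A a B j) Z1 Z2 => [|t0] Z1 Z2 H.
  - move: Z1; rewrite /atZ /W /= inordK //; lia.
  - move: Z1 Z2; rewrite /atZ /W /=.
    have := H t0 (ltnSn _); rewrite /W => ->.
    case: walk => [[u h]|] //; case: (A a _ h) => [p|] //; case: ifP => // hp.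
    have hl := nb_lt s (lt3 u) hp; have hl' := nb_lt s' (lt3 u) hp.
    rewrite !iK // => /eqP e1 /eqP e2.
    exact: (entry_nat (lt3 u) hp e1 e2).
have all T : forall t, t <= T -> W N' s A a t = W N' s' A a t.
  elim: T => [|T IH] t htT; first by case: t htT.
  case: (leqP t T) => htT'; first exact: IH.
  have -> : t = T.+1 by lia.
  have eT := IH T (leqnn T); move: eT; rewrite /W => eT.
  rewrite /= eT.
  case E: walk => [[u h]|] //; case EA: (A a _ h) => [p|] //; case: ifP => // hp.
  have hl := nb_lt s (lt3 u) hp; have hl' := nb_lt s' (lt3 u) hp.
  have Hj (j : 'I_m) : [\/ (u : nat) = 2 * m + j, nb s u p = 2 * m + j | nb s' u p = 2 * m + j] ->
      s j = s' j.
    move=> Hor; apply: Q => t' ht'; apply: IH.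
    suff : tau N' s A a B j <= T.+1 by lia.
    have [_ [_ M1]] := tau_spec hn Es (ltn_ord j).
    have [_ [_ M2]] := tau_spec hn Es' (ltn_ord j).
    case: Hor => e.
    + apply: leqW; apply: M1; by rewrite /atZ /W eT E e.
    + apply: M1; by rewrite /atZ /W /= eT E EA hp iK // e.
    + rewrite ht; apply: M2; by rewrite /atZ /W /= E EA hp iK // e.
  have [e1 e2] := local_nat hs hs' (lt3 u) hp Hj.
  by rewrite e1 e2.
apply/ffunP => j; apply: Q => t _; exact: (all t).
Qed.


Lemma ffact_ge n k : (n - k) ^ k <= n ^_ k.
Proof.
elim: k n => [|k IH] n //; rewrite ffactnS expnS.
apply: leq_mul; first exact: leq_subr.
by have := IH n.-1; rewrite -subn1 -subnDA add1n.
Qed.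

Lemma arith_final m P B L : 2 <= m -> L * 2 <= m * P -> 4 * (2 ^ P * B.+1) <= m * m ->
  L.+1 * 2 ^ L * B.+1 ^ m < (m * m) ^_ m.
Proof.
move=> hm hL hX.
set X := 2 ^ P * B.+1.
have X1 : 0 < X by rewrite muln_gt0 expn_gt0.
have h1 : L.+1 * 2 ^ L * B.+1 ^ m <= X ^ m.
  rewrite expnMn -expnM.
  apply: leq_mul => //. apply: (@leq_trans (2 ^ L * 2 ^ L)).
    by apply: leq_mul => //; apply: ltn_expl.
  rewrite -expnD leq_exp2l //; lia.
apply: (leq_trans _ (ffact_ge _ _)); apply: (leq_ltn_trans h1).
rewrite ltn_exp2r; last lia.
have q2 : 2 * m <= m * m by rewrite mulnC leq_mul2l hm orbT.
move: hX q2; set q := m * m; lia.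
Qed.

Local Open Scope ring_scope.

Theorem mainTheorem8 (phi : nat -> nat) (f : Oracle)
  (hf : forall eps : rat, 0 < eps -> exists N : nat, forall n : nat, (N <= n)%N ->
          forall (G : PGraph n) (v : 'I_n), is_pgraph G ->
            (size (f n G v))%:R <= eps * (n * phi n)%N%:R)
  (A : Algo) :
  exists2 c : rat, 0 < c &
    forall N : nat, exists n : nat, (N <= n)%N /\
      exists (G : PGraph n) (v : 'I_n), is_pgraph G /\
        forall k : nat, explores_in G A (f n G v) v k ->
          c * (n ^ 2)%N%:R <= (k * 2 ^ phi n)%N%:R.
Proof.
have e6 : (0 : rat) < 6%:R^-1 by rewrite invr_gt0 ltr0n.
have [N0 hN0] := hf _ e6.
exists (72%:R^-1); first by rewrite invr_gt0 ltr0n.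
move=> N.
pose m := maxn (maxn N N0) 2.
have hm2 : (2 <= m)%N by rewrite /m; lia.
pose N' := (3 * m).-1.
have hn : N'.+1 = (3 * m)%N by rewrite /N' prednK //; lia.
exists N'.+1; split; first by rewrite hn /m; lia.
pose v : 'I_N'.+1 := inord 0.
have [Hyes|Hno] := (classic (exists (G : PGraph N'.+1) (v0 : 'I_N'.+1), is_pgraph G /\
  forall k, explores_in G A (f N'.+1 G v0) v0 k ->
    (72%:R^-1 : rat) * (N'.+1 ^ 2)%N%:R <= (k * 2 ^ phi N'.+1)%N%:R)); first exact: Hyes.
exfalso.
set P := phi N'.+1 in Hno.
have sq : (N'.+1 ^ 2 = 9 * (m * m))%N by rewrite hn expnMn mulnn.
have Hk (s : {ffun 'I_m -> 'I_m * 'I_m}) : injective s -> exists k,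
    explores_in (Gs N' s) A (f N'.+1 (Gs N' s) v) v k /\ (8 * (k * 2 ^ P) < m * m)%N.
  move=> hs; apply: NNPP => H1; apply: Hno; exists (Gs N' s), v; split; first exact: Gs_pgraph.
  move=> k hk; rewrite leNgt; apply/negP => hlt; apply: H1; exists k; split => //.
  move: hlt; rewrite mulrC ltr_pdivlMr ?ltr0n // -natrM ltr_nat sq; lia.
have Hsz (s : {ffun 'I_m -> 'I_m * 'I_m}) : injective s ->
    (size (f N'.+1 (Gs N' s) v) * 2 <= m * P)%N.
  move=> hs; have := hN0 N'.+1 _ (Gs N' s) v (Gs_pgraph hn hs).
  rewrite mulrC ler_pdivlMr ?ltr0n // -natrM ler_nat.
  move=> h; have {h}h := h ltac:(rewrite hn /m; lia). rewrite -/P in h.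
  have e3 : (N'.+1 * P = 3 * (m * P))%N by rewrite hn mulnA.
  rewrite e3 in h; lia.
pose L := ((m * P) %/ 2)%N.
have HszL (s : {ffun 'I_m -> 'I_m * 'I_m}) : injective s -> (size (f N'.+1 (Gs N' s) v) <= L)%N.
  by move=> hs; rewrite leq_divRL // Hsz.
have k1 (s : {ffun 'I_m -> 'I_m * 'I_m}) k :
    explores_in (Gs N' s) A (f N'.+1 (Gs N' s) v) v k -> (1 <= k)%N.
  move=> [_ hall]; case: k hall => // hall.
  have [i [hi [h hw]]] := hall (inord 1).
  move: hi; rewrite leqn0 => /eqP ei; move: hw; rewrite ei /= => -[] /(congr1 (@nat_of_ord _)).
  by rewrite /v !inordK // hn; lia.
pose B := ((m * m) %/ (8 * 2 ^ P))%N.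
have HkB (s : {ffun 'I_m -> 'I_m * 'I_m}) : injective s ->
    Expl N' s A (f N'.+1 (Gs N' s) v) B.
  move=> hs; have [k [hk hlt]] := Hk s hs; exists k => //.
  by rewrite leq_divRL ?muln_gt0 ?expn_gt0 //; lia.
pose s0 : {ffun 'I_m -> 'I_m * 'I_m} := [ffun j => (j, j)].
have hs0 : injective s0 by move=> x y; rewrite !ffunE => -[].
have B1 : (1 <= B)%N.
  have [k [hk hlt]] := Hk s0 hs0; have := k1 _ _ hk.
  rewrite leq_divRL ?muln_gt0 ?expn_gt0 // => hk1.
  have : (2 ^ P <= k * 2 ^ P)%N by rewrite leq_pmull.
  lia.
have HB : (4 * (2 ^ P * B.+1) <= m * m)%N.
  have h1 := leq_trunc_div (m * m) (8 * 2 ^ P); rewrite -/B in h1.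
  have h2 : (B * (8 * 2 ^ P) = 8 * (2 ^ P * B))%N by rewrite mulnC -mulnA.
  have h3 : (2 ^ P <= 2 ^ P * B)%N by rewrite leq_pmulr.
  rewrite mulnS; rewrite h2 in h1; lia.
pose Phi (s : {ffun 'I_m -> 'I_m * 'I_m}) :
    ('I_L.+1 * L.-tuple bool) * {ffun 'I_m -> 'I_B.+1} :=
  let a := f N'.+1 (Gs N' s) v in
  ((inord (size a), [tuple nth false a i | i < L]),
   [ffun j : 'I_m => inord (tau N' s A a B j)]).
have inj : {in [set s : {ffun 'I_m -> 'I_m * 'I_m} | injectiveb s] &, injective Phi}.
  move=> s s'; rewrite !inE => /injectiveP hs /injectiveP hs' e.
  have ea : f N'.+1 (Gs N' s) v = f N'.+1 (Gs N' s') v.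
    have e1 := congr1 (fun x => nat_of_ord x.1.1) e; have e2 := congr1 (fun x => x.1.2) e.
    move: e1 e2; rewrite /Phi /= !inordK; last first.
      by rewrite ltnS HszL. by rewrite ltnS HszL.
    move=> e1 e2; apply: (eq_from_nth (x0 := false)) => // i hi.
    have hiL : (i < L)%N by apply: (leq_trans hi); apply: HszL.
    by have := congr1 (fun t => tnth t (Ordinal hiL)) e2; rewrite !tnth_mktuple.
  apply: (Winj (a := f N'.+1 (Gs N' s) v) (B := B) hn hs hs' (HkB s hs)); first by rewrite ea; apply: HkB.
  move=> j; have := congr1 (fun x : ('I_L.+1 * L.-tuple bool) * {ffun 'I_m -> 'I_B.+1} => nat_of_ord (x.2 j)) e; rewrite /Phi /= !ffunE -ea !inordK //.
  + rewrite ltnS; have [] := tau_spec hn (HkB s' hs') (ltn_ord j); by rewrite ea.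
  + rewrite ltnS; have [] := tau_spec hn (HkB s hs) (ltn_ord j); by [].
have := @leq_card_in _ _ Phi _ inj.
rewrite card_inj_ffuns !card_prod !card_ord card_tuple card_bool card_ffun !card_ord.
rewrite leqNgt; move/negP; apply.
apply: (arith_final (P := P)) => //.
by rewrite /L; apply: leq_trunc_div.
Qed.
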